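(* Suppose Assumptions A1 and A3 hold. Then for every $i\in\mathcal{A}$ and $t\in\mathbb{N}$, $$\|\mathbf{q}_i(t)\|^2\le 2L^2\big(1+\mu^2K\|\mathbf{e}_i(t)-\bar{\mathbf{e}}(t)\|^2\big).$$
   Context: Let $\mathcal{A}$ be a finite set of $N$ agents. Agent $i$ has a decision variable $\mathbf{y}_i$ in a Euclidean space, a local objective $\phi_i$, a vector function $\mathbf{g}_i=(g_{i1},\dots,g_{iK})$ with values in $\mathbb{R}^K$, a nonempty closed convex set $\mathcal{G}_{i0}$, and a finite index set $\tilde{\mathcal{K}}_i$ of local constraint functions $c_{ik}$. Put $\tilde{\mathcal{G}}_i=\{\mathbf{y}_i: c_{ik}(\mathbf{y}_i)\le 0\ \forall k\in\tilde{\mathcal{K}}_i\}$, $\mathcal{G}_i=\mathcal{G}_{i0}\cap\tilde{\mathcal{G}}_i$, $\mathcal{G}=\prod_{i}\mathcal{G}_i$, $\mathbf{g}(\mathbf{y})=\sum_i\mathbf{g}_i(\mathbf{y}_i)$, $\mathcal{K}_G=\{1,\dots,K\}$, $x^+=\max(0,x)$. For a fixed $\mu>0$, $\Phi(\mathbf{y})=\sum_i\phi_i(\mathbf{y}_i)+\frac{\mu}{2N}\sum_{k\in\mathcal{K}_G}g_k^+(\mathbf{y})^2$. Norms are Euclidean, $P_S$ is projection, $\mathsf{d}_S(\mathbf{x})=\|\mathbf{x}-P_S(\mathbf{x})\|$, $\partial f(\mathbf{x})$ a subgradient. Algorithm: each agent picks $\mathbf{y}_i(0)\in\mathcal{G}_{i0}$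 and sets $\mathbf{e}_i(0)=\mathbf{g}_i(\mathbf{y}_i(0))$; for $t\in\mathbb{N}$: $\mathbf{z}_i(t)=P_{\mathcal{G}_{i0}}\big(\mathbf{y}_i(t)-\gamma_t(\mathbf{q}_i(t)+\mathbf{V}_i(t))\big)$, $\mathbf{y}_i(t+1)=P_{\mathcal{G}_{i0}}\big(\mathbf{z}_i(t)-\beta_{it}\sum_{k\in\mathcal{K}_{it}}\frac{c^+_{ik}(\mathbf{z}_i(t))}{\|\mathbf{d}_{ik}\|^2}\mathbf{d}_{ik}\big)$, $\mathbf{e}_i(t+1)=\sum_{j\in\mathcal{A}}w_{ij}(t)\mathbf{e}_j(t)+\mathbf{g}_i(\mathbf{y}_i(t+1))-\mathbf{g}_i(\mathbf{y}_i(t))$, where $\mathbf{q}_i(t)=\partial\phi_i(\mathbf{y}_i(t))+\mu\sum_{k\in\mathcal{K}_G}\partial g_{ik}(\mathbf{y}_i(t))\,e^+_{ik}(t)$ ($e_{ik}$ the $k$-th entry of $\mathbf{e}_i$); $\gamma_t>0$; $\mathbf{V}_i(t)$ arbitrary vectors; $\mathcal{K}_{it}\subset\tilde{\mathcal{K}}_i$ of size $s_i\ge1$; $\beta_{it}\in(0,2/s_i)$; $\mathbf{d}_{ik}$ a subgradient of $c_{ik}$ at $\mathbf{z}_i(t)$ if $c_{ik}(\mathbf{z}_i(t))>0$ and a fixed nonzero vector otherwise; $W(t)=[w_{ij}(t)]$ weight matrices. $\bar{\mathbf{e}}(t)=\frac1N\sum_i\mathbf{e}_i(t)$. A1: (a)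 each $\mathcal{G}_i$ nonempty convex, $\mathcal{G}_{i0}$ closed convex; (b) $\phi_i$, $g_{ik}$ convex and $L$-Lipschitz on $\mathcal{G}_{i0}$, and $\Phi$ $L$-Lipschitz on $\prod_i\mathcal{G}_{i0}$; (c) $c_{ik}$ convex and $L$-Lipschitz on $\mathcal{G}_{i0}$, and there is $C>0$ with $\mathsf{d}^2_{\mathcal{G}_i}(\mathbf{z})\le C\,\mathbb{E}_{\mathcal{K}}[\sum_{k\in\mathcal{K}}c^+_{ik}(\mathbf{z})^2]$ for all $\mathbf{z}\in\mathcal{G}_{i0}$, $\mathcal{K}$ uniform over size-$s_i$ subsets of $\tilde{\mathcal{K}}_i$; (d) $\Phi$ has a minimizer over $\mathcal{G}$. A3: with $\mathcal{E}_t=\{(i,j):w_{ij}(t)>0\}$, there is $Q\in\mathbb{N}$ such that for all $k\ge0$ the graph $(\mathcal{A},\bigcup_{l=1}^Q\mathcal{E}_{k+l})$ is strongly connected; each $W(t)$ is doubly stochastic; there is $w_{\min}>0$ with every nonzero $w_{ij}(t)\in[w_{\min},1]$.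
   Formalization: L-Lipschitz continuity of φᵢ, gᵢₖ, cᵢₖ on 𝒢ᵢ₀ and of Φ on ∏ᵢ𝒢ᵢ₀ also includes the condition that every subgradient at a point of that set has norm at most L. The statement above fails without it. *)

(* Defs.v *)
From mathcomp Require Import all_boot all_order all_algebra.
From mathcomp Require Import all_classical all_reals all_analysis.
Import numFieldNormedType.Exports.
Set Implicit Arguments. Unset Strict Implicit. Unset Printing Implicit Defensive.
Import Order.TTheory GRing.Theory Num.Theory.
Local Open Scope ring_scope.
Local Open Scope classical_set_scope.

Section Defs.
Context {R : realType}.

Definition dotv (m : nat) (u v : 'rV[R]_m) : R := \sum_(j < m) u 0 j * v 0 j.
Definition nrm2 (m : nat) (u : 'rV[R]_m) : R := dotv u u.
Definition nrm (m : nat) (u : 'rV[R]_m) : R := Num.sqrt (nrm2 u).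

Definition pos (x : R) : R := Num.max 0 x.

Definition is_subgrad (m : nat) (f : 'rV[R]_m -> R) (x d : 'rV[R]_m) : Prop :=
  forall z, f x + dotv d (z - x) <= f z.

Definition cvx_set (m : nat) (S : set 'rV[R]_m) : Prop :=
  forall x y (a : R), S x -> S y -> 0 <= a <= 1 -> S (a *: x + (1 - a) *: y).

Definition cvx_on (m : nat) (S : set 'rV[R]_m) (f : 'rV[R]_m -> R) : Prop :=
  forall x y (a : R), S x -> S y -> 0 <= a <= 1 ->
    f (a *: x + (1 - a) *: y) <= a * f x + (1 - a) * f y.

(* "f is L-Lipschitz on S", read (as the paper uses it) for convex functions:
   the Lipschitz inequality on S, and every subgradient of f at a point of S
   has norm at most L. *)
Definition lip_on (m : nat) (L : R) (S : set 'rV[R]_m) (f : 'rV[R]_m -> R) :=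
  (forall x y, S x -> S y -> `|f x - f y| <= L * nrm (x - y)) /\
  (forall x d, S x -> is_subgrad f x d -> nrm d <= L).

Definition is_proj (m : nat) (S : set 'rV[R]_m) (x p : 'rV[R]_m) : Prop :=
  S p /\ forall w, S w -> nrm2 (x - p) <= nrm2 (x - w).

(* d_S(x)^2 <= b  (d_S(x) = inf_{w in S} ||x - w||) *)
Definition dist2_le (m : nat) (S : set 'rV[R]_m) (x : 'rV[R]_m) (b : R) : Prop :=
  forall eps : R, 0 < eps -> exists w, S w /\ nrm2 (x - w) <= b + eps.

Definition pvec (N : nat) (n : 'I_N -> nat) := forall i : 'I_N, 'rV[R]_(n i).
Context {N : nat} {n : 'I_N -> nat}.
Local Notation pv := (pvec n).
Definition pdot (u v : pv) : R := \sum_i dotv (u i) (v i).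
Definition pnrm (u : pv) : R := Num.sqrt (pdot u u).
Definition psub (u v : pv) : pv := fun i => u i - v i.

Definition is_psubgrad (F : pv -> R) (x d : pv) : Prop :=
  forall z, F x + pdot d (psub z x) <= F z.

Definition plip_on (L : R) (S : pv -> Prop) (F : pv -> R) :=
  (forall x y, S x -> S y -> `|F x - F y| <= L * pnrm (psub x y)) /\
  (forall x d, S x -> is_psubgrad F x d -> pnrm d <= L).

Context {K : nat}.
Definition gsum (g : forall i : 'I_N, 'I_K -> 'rV[R]_(n i) -> R) (y : pv) (k : 'I_K) : R :=
  \sum_i g i k (y i).
Definition Phi (mu : R) (phi : forall i : 'I_N, 'rV[R]_(n i) -> R)
  (g : forall i : 'I_N, 'I_K -> 'rV[R]_(n i) -> R) (y : pv) : R :=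
  \sum_i phi i (y i) + mu / (2 * N%:R) * \sum_(k < K) (pos (gsum g y k)) ^+ 2.

Definition gvec (g : forall i : 'I_N, 'I_K -> 'rV[R]_(n i) -> R) (i : 'I_N)
  (x : 'rV[R]_(n i)) : 'rV[R]_K := \row_k g i k x.

Definition ebar (e : 'I_N -> 'rV[R]_K) : 'rV[R]_K := N%:R^-1 *: \sum_i e i.

Definition qvec (mu : R) (dphi : forall i : 'I_N, 'rV[R]_(n i) -> 'rV[R]_(n i))
  (dg : forall i : 'I_N, 'I_K -> 'rV[R]_(n i) -> 'rV[R]_(n i))
  (i : 'I_N) (y : 'rV[R]_(n i)) (e : 'rV[R]_K) : 'rV[R]_(n i) :=
  dphi i y + mu *: \sum_(k < K) pos (e 0 k) *: dg i k y.

Definition union_graph_strongly_connected (W : nat -> 'M[R]_N) (Q k : nat) : Prop :=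
  forall i j : 'I_N,
    connect (fun a b : 'I_N => [exists l : 'I_Q, 0 < W (k + l.+1)%N a b]) i j.

Definition doubly_stochastic (M : 'M[R]_N) : Prop :=
  (forall i j, 0 <= M i j) /\
  (forall i, \sum_j M i j = 1) /\ (forall j, \sum_i M i j = 1).

End Defs.

(* Main.v *)
Require Import Defs.
From mathcomp Require Import all_boot all_order all_algebra.
From mathcomp Require Import all_classical all_reals all_analysis.
From mathcomp Require Import ring lra.
Import numFieldNormedType.Exports.
Import Order.TTheory GRing.Theory Num.Theory.
Set Implicit Arguments. Unset Strict Implicit.
Local Open Scope ring_scope.
Local Open Scope classical_set_scope.

Section Aux.
Variable R : realType.

Lemma posE0 (x : R) : x <= 0 -> pos x = 0.
Proof. by move=> h; rewrite /pos max_l. Qed.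
Lemma posE1 (x : R) : 0 <= x -> pos x = x.
Proof. by move=> h; rewrite /pos max_r. Qed.
Lemma pos_ge0 (x : R) : 0 <= pos x.
Proof. by case: (lerP x 0) => h; [rewrite posE0 | rewrite posE1 // ltW]. Qed.
Lemma pos_scale (c x : R) : 0 <= c -> pos (c * x) = c * pos x.
Proof. by move=> h; rewrite /pos maxr_pMr // mulr0. Qed.
Lemma pos_sq_sub (a b : R) : pos b ^+ 2 + 2 * pos b * (a - b) <= pos a ^+ 2.
Proof.
case: (lerP b 0) => hb; first by rewrite (posE0 hb); have := pos_ge0 a; nra.
rewrite (posE1 (ltW hb)).
case: (lerP a 0) => ha; first by rewrite (posE0 ha); nra.
rewrite (posE1 (ltW ha)); have := sqr_ge0 (a - b); nra.
Qed.
Lemma pos_diff (a b : R) : (pos a - pos b) ^+ 2 <= (a - b) ^+ 2.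
Proof.
case: (lerP b 0) => hb; [rewrite (posE0 hb) | rewrite (posE1 (ltW hb))];
case: (lerP a 0) => ha; (try rewrite (posE0 ha)); (try rewrite (posE1 (ltW ha))); have := sqr_ge0 (a - b); have := sqr_ge0 a; have := sqr_ge0 b; nra.
Qed.

Lemma nrm2E m (u : 'rV[R]_m) : nrm2 u = \sum_j u 0 j ^+ 2.
Proof. by rewrite /nrm2 /dotv; apply eq_bigr => j _; rewrite expr2. Qed.
Lemma nrm2_ge0 m (u : 'rV[R]_m) : 0 <= nrm2 u.
Proof. rewrite nrm2E; apply: sumr_ge0 => j _; exact: sqr_ge0. Qed.
Lemma dotvDl m (a b w : 'rV[R]_m) : dotv (a + b) w = dotv a w + dotv b w.
Proof. rewrite /dotv -big_split /=; apply eq_bigr => j _; by rewrite mxE mulrDl. Qed.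
Lemma dotvZl m c (a w : 'rV[R]_m) : dotv (c *: a) w = c * dotv a w.
Proof. rewrite /dotv mulr_sumr; apply eq_bigr => j _; by rewrite mxE mulrA. Qed.
Lemma dotv_suml m K (f : 'I_K -> 'rV[R]_m) w :
  dotv (\sum_k f k) w = \sum_k dotv (f k) w.
Proof.
rewrite /dotv exchange_big; apply eq_bigr => j _; by rewrite summxE mulr_suml.
Qed.
Lemma nrm2Z m c (a : 'rV[R]_m) : nrm2 (c *: a) = c ^+ 2 * nrm2 a.
Proof. rewrite !nrm2E mulr_sumr; apply eq_bigr => j _; rewrite mxE; ring. Qed.
Lemma nrm2D_le m (a b : 'rV[R]_m) : nrm2 (a + b) <= 2 * nrm2 a + 2 * nrm2 b.
Proof.
rewrite !nrm2E !mulr_sumr -big_split /=; apply: ler_sum => j _; rewrite mxE.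
have := sqr_ge0 (a 0 j - b 0 j); nra.
Qed.

Lemma sqr_sum_le K (x : 'I_K -> R) : (\sum_k x k) ^+ 2 <= K%:R * \sum_k x k ^+ 2.
Proof.
rewrite expr2 mulr_suml.
apply: (@le_trans _ _ (\sum_k \sum_l (x k ^+ 2 / 2 + x l ^+ 2 / 2))).
  apply: ler_sum => k _; rewrite mulr_sumr; apply: ler_sum => l _; have := sqr_ge0 (x k - x l); nra.
under eq_bigr => k _ do rewrite big_split /=.
rewrite big_split /= exchange_big /=.
have E : forall c : R, \sum_(j < K) c = c *+ K.
  by move=> c; rewrite (eq_bigl (fun j => j \in 'I_K)) // sumr_const card_ord.
by rewrite !E -!mulr_suml -mulrnDl -splitr mulr_natl lexx.
Qed.

Lemma nrm2_sum_le m K (w : 'I_K -> 'rV[R]_m) :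
  nrm2 (\sum_k w k) <= K%:R * \sum_k nrm2 (w k).
Proof.
rewrite nrm2E; under eq_bigr => j _ do rewrite summxE.
apply: (@le_trans _ _ (\sum_j (K%:R * \sum_k w k 0 j ^+ 2))).
  by apply: ler_sum => j _; apply: sqr_sum_le.
rewrite -mulr_sumr exchange_big /=; rewrite le_eqVlt; apply/orP; left; apply/eqP.
by congr (_ * _); apply eq_bigr => k _; rewrite nrm2E.
Qed.
End Aux.
Arguments nrm2_sum_le {R m K}.

Unset Implicit Arguments. Set Strict Implicit.
Theorem lemma4
  (R : realType) (N : nat) (n : 'I_N -> nat) (K : nat)
  (* problem data *)
  (phi : forall i : 'I_N, 'rV[R]_(n i) -> R)
  (g : forall i : 'I_N, 'I_K -> 'rV[R]_(n i) -> R)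
  (G0 : forall i : 'I_N, set 'rV[R]_(n i))
  (m : 'I_N -> nat) (c : forall i : 'I_N, 'I_(m i) -> 'rV[R]_(n i) -> R)
  (mu L C : R) (s : 'I_N -> nat)
  (* subgradient oracles *)
  (dphi : forall i : 'I_N, 'rV[R]_(n i) -> 'rV[R]_(n i))
  (dg : forall i : 'I_N, 'I_K -> 'rV[R]_(n i) -> 'rV[R]_(n i))
  (dc : forall i : 'I_N, 'I_(m i) -> 'rV[R]_(n i) -> 'rV[R]_(n i))
  (dfix : forall i : 'I_N, 'I_(m i) -> 'rV[R]_(n i))
  (* algorithm parameters *)
  (gamma : nat -> R) (V : nat -> forall i : 'I_N, 'rV[R]_(n i))
  (Ksel : nat -> forall i : 'I_N, {set 'I_(m i)}) (beta : nat -> 'I_N -> R)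
  (W : nat -> 'M[R]_N) (Q : nat) (wmin : R)
  (* trajectories *)
  (y z : nat -> forall i : 'I_N, 'rV[R]_(n i)) (e : nat -> 'I_N -> 'rV[R]_K) :
  let Gi := fun i : 'I_N => fun x : 'rV[R]_(n i) =>
              G0 i x /\ forall k : 'I_(m i), c i k x <= 0 in
  let Gprod := fun x : pvec (R:=R) n => forall i, Gi i (x i) in
  let G0prod := fun x : pvec (R:=R) n => forall i, G0 i (x i) in
  (0 < N)%N -> 0 < mu ->
  (* ---- Assumption A1 ---- *)
  (* (a) *)
  (forall i, (exists x, Gi i x) /\ cvx_set (Gi i)) ->
  (forall i, closed (G0 i) /\ cvx_set (G0 i) /\ exists x, G0 i x) ->
  (* (b) *)
  (forall i, cvx_on (G0 i) (phi i) /\ lip_on L (G0 i) (phi i)) ->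
  (forall i k, cvx_on (G0 i) (g i k) /\ lip_on L (G0 i) (g i k)) ->
  plip_on L G0prod (Phi mu phi g) ->
  (* (c) *)
  (forall i k, cvx_on (G0 i) (c i k) /\ lip_on L (G0 i) (c i k)) ->
  0 < C ->
  (forall i, (1 <= s i <= m i)%N) ->
  (forall i x, G0 i x ->
     dist2_le (Gi i) x
       (C * ((\sum_(S : {set 'I_(m i)} | #|S| == s i)
                \sum_(k in S) pos (c i k x) ^+ 2)
             / #|[set S : {set 'I_(m i)} | #|S| == s i]|%:R))) ->
  (* (d) *)
  (exists ys, Gprod ys /\ forall x, Gprod x -> Phi mu phi g ys <= Phi mu phi g x) ->
  (* ---- Assumption A3 ---- *)
  (forall k, union_graph_strongly_connected W Q k) ->
  (forall t, doubly_stochastic (W t)) ->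
  0 < wmin ->
  (forall t i j, W t i j != 0 -> wmin <= W t i j <= 1) ->
  (* ---- subgradient oracles ---- *)
  (forall i x, G0 i x -> is_subgrad (phi i) x (dphi i x)) ->
  (forall i k x, G0 i x -> is_subgrad (g i k) x (dg i k x)) ->
  (forall i k x, G0 i x -> 0 < c i k x -> is_subgrad (c i k) x (dc i k x)) ->
  (forall i k, dfix i k != 0) ->
  (* ---- algorithm ---- *)
  (forall t, 0 < gamma t) ->
  (forall t i, #|Ksel t i| = s i) ->
  (forall t i, 0 < beta t i < 2 / (s i)%:R) ->
  (forall i, G0 i (y 0%N i)) ->
  (forall i, e 0%N i = gvec g (y 0%N i)) ->
  (forall t i, is_proj (G0 i) (y t i - gamma t *: (qvec mu dphi dg (y t i) (e t i) + V t i))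
                 (z t i)) ->
  (forall t i,
     let d := fun k : 'I_(m i) => if 0 < c i k (z t i) then dc i k (z t i) else dfix i k in
     is_proj (G0 i)
       (z t i - beta t i *: \sum_(k in Ksel t i) (pos (c i k (z t i)) / nrm2 (d k)) *: d k)
       (y t.+1 i)) ->
  (forall t i, e t.+1 i = \sum_j W t i j *: e t j + gvec g (y t.+1 i) - gvec g (y t i)) ->
  (* ---- conclusion ---- *)
  forall (i : 'I_N) (t : nat),
    nrm2 (qvec mu dphi dg (y t i) (e t i))
      <= 2 * L ^+ 2 * (1 + mu ^+ 2 * K%:R * nrm2 (e t i - ebar (e t))).
Proof.
move=> Gi Gprod G0prod HN Hmu HGi HG0 Hphi Hg HPhi Hc HC Hs Hdist Hmin Hconn Hds
  Hwmin Hw Hdphi Hdg Hdc Hdfix Hgam Hsel Hbeta Hy0 He0 Hz Hy He i t.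
have HY : forall t j, G0 j (y t j).
  by case=> [|t'] j; [exact: Hy0 | have [] := Hy t' j].
have Hsum : forall t, \sum_j e t j = \sum_j gvec g (y t j).
  elim=> [|t' IH]; first by apply eq_bigr => j _; rewrite He0.
  under eq_bigr => j _ do rewrite He.
  rewrite !big_split /= sumrN.
  have HA : \sum_j \sum_k W t' j k *: e t' k = \sum_k e t' k.
    rewrite exchange_big; apply eq_bigr => k _; rewrite -scaler_suml.
    by have [_ [_ ->]] := Hds t'; rewrite scale1r.
  by rewrite HA IH addrAC subrr add0r.
have Heb : forall k, ebar (e t) 0 k = N%:R^-1 * gsum g (y t) k.
  move=> k; rewrite /ebar Hsum mxE summxE /gsum; congr (_ * _).
  by apply eq_bigr => j _; rewrite mxE.
have HN0 : (0:R) < N%:R by rewrite ltr0n.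
set Y := y t.
pose d : pvec n := fun j => dphi j (Y j) + mu *: \sum_(k < K) pos (ebar (e t) 0 k) *: dg j k (Y j).
have Hsub : is_psubgrad (Phi mu phi g) Y d.
  move=> zz.
  pose D := fun k => \sum_j dotv (dg j k (Y j)) (zz j - Y j).
  have Epd : pdot d (psub zz Y) = \sum_j dotv (dphi j (Y j)) (zz j - Y j)
      + mu * (N%:R^-1 * \sum_k pos (gsum g Y k) * D k).
    rewrite /pdot /psub.
    under eq_bigr => j _ do rewrite dotvDl dotvZl dotv_suml.
    rewrite big_split /=; congr (_ + _).
    rewrite -mulr_sumr; congr (_ * _); rewrite mulr_sumr exchange_big; apply eq_bigr => k _.
    rewrite /D Heb pos_scale; last by rewrite invr_ge0 ltW.
    rewrite mulrA mulr_sumr; apply eq_bigr => j _; by rewrite dotvZl.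
  have HA : \sum_j phi j (Y j) + \sum_j dotv (dphi j (Y j)) (zz j - Y j) <= \sum_j phi j (zz j).
    rewrite -big_split; apply ler_sum => j _; exact: (Hdphi j (Y j) (HY t j) (zz j)).
  have HB : forall k, pos (gsum g Y k) ^+ 2 + 2 * (pos (gsum g Y k) * D k)
       <= pos (gsum g zz k) ^+ 2.
    move=> k.
    have h1 : gsum g Y k + D k <= gsum g zz k.
      rewrite /gsum /D -big_split; apply ler_sum => j _; exact: (Hdg j k (Y j) (HY t j) (zz j)).
    have := pos_sq_sub (gsum g zz k) (gsum g Y k); have := pos_ge0 (gsum g Y k); nra.
  have HB' : \sum_(k < K) (pos (gsum g Y k) ^+ 2 + 2 * (pos (gsum g Y k) * D k))
       <= \sum_(k < K) pos (gsum g zz k) ^+ 2.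
    by apply: ler_sum => k _; exact: HB.
  rewrite big_split /= -mulr_sumr in HB'.
  have Hc0 : 0 <= mu / (2 * N%:R) by apply: divr_ge0; [exact: ltW | rewrite mulr_ge0 // ltW].
  have HB2 := ler_wpM2l Hc0 HB'.
  have Ec : mu / (2 * N%:R) * 2 = mu * N%:R^-1.
    have h2 : (2:R) != 0 by rewrite pnatr_eq0.
    by rewrite invfM mulrA mulrAC divfK.
  rewrite /Phi Epd.
  move: HB2; rewrite mulrDr mulrA Ec -mulrA.
  set A1 := \sum_j phi j (Y j) in HA *.
  lra.
have HL := (HPhi.2 Y d (fun j => HY t j) Hsub).
have Hdi : nrm2 (d i) <= L ^+ 2.
  have h1 : nrm2 (d i) <= pdot d d.
    rewrite /pdot (bigD1 i) //= lerDl; apply: sumr_ge0 => j _; exact: nrm2_ge0.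
  have h2 : pdot d d = pnrm d ^+ 2.
    by rewrite /pnrm sqr_sqrtr //; apply: sumr_ge0 => j _; exact: nrm2_ge0.
  have h3 : 0 <= pnrm d := sqrtr_ge0 _.
  rewrite h2 in h1; nra.
have Hdg_bd : forall k, nrm2 (dg i k (Y i)) <= L ^+ 2.
  move=> k; have hn := (Hg i k).2.2 _ _ (HY t i) (Hdg i k _ (HY t i)).
  have h0 := nrm2_ge0 (dg i k (Y i)).
  have h3 : 0 <= nrm (dg i k (Y i)) := sqrtr_ge0 _.
  have h2 : nrm2 (dg i k (Y i)) = nrm (dg i k (Y i)) ^+ 2 by rewrite /nrm sqr_sqrtr.
  rewrite h2; nra.
have Eq : qvec mu dphi dg (Y i) (e t i) = d i +
    mu *: \sum_k (pos (e t i 0 k) - pos (ebar (e t) 0 k)) *: dg i k (Y i).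
  rewrite /qvec /d -addrA -scalerDr -big_split /=; congr (_ + _ *: _).
  by apply eq_bigr => k _; rewrite -scalerDl addrC subrK.
rewrite Eq; apply: le_trans (nrm2D_le _ _) _; rewrite nrm2Z.
have HS : nrm2 (\sum_k (pos (e t i 0 k) - pos (ebar (e t) 0 k)) *: dg i k (Y i))
    <= K%:R * (L ^+ 2 * nrm2 (e t i - ebar (e t))).
  apply: le_trans (nrm2_sum_le _) _; apply: ler_wpM2l; first exact: ler0n.
  rewrite nrm2E mulr_sumr; apply ler_sum => k _; rewrite nrm2Z !mxE.
  rewrite [L ^+ 2 * _]mulrC; apply: ler_pM.
  - exact: sqr_ge0.
  - exact: nrm2_ge0.
  - exact: pos_diff.
  - exact: Hdg_bd.
have HS2 := ler_wpM2l (sqr_ge0 mu) HS.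
move: HS2 Hdi.
set a := nrm2 (d i). set b := nrm2 (\sum_k _). set X := nrm2 (e t i - ebar (e t)).
move=> *. nra.
Qed.
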